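(* Let $\mathcal G=(G,\pi_G,c_G)\in\mathrm{LiftPMod}(\mathbb B,\mathcal C)$ with $G=(V_G,E_G)$ and $w_G\in\mathrm{Param}(\mathcal G)$; let $\mathcal H=(H,\pi_H,c_H)\in\mathrm{LiftPMod}(\mathbb B,\mathcal C)$ and $w_H\in\mathrm{Param}(\mathcal H)$; let $\mathcal X\subseteq\prod_{u\in\mathcal C}\mathcal Y_{p_{\mathcal C}(u)}$. Let $\eta\in\mathbb R_+$ and suppose $\varphi:\mathcal G\to\mathcal H$ is a morphism of lifted perceptrons such that $\|(w_G)_e-(w_H)_{\varphi(e)}\|\le\eta$ for all $e\in E_G$. Then for every $v\in V_G$, $\sup_{x\in\mathcal X}\|[\mathcal F_{\mathcal G}(w_G,x)]_v-[\mathcal F_{\mathcal H}(w_H,x)]_{\varphi(v)}\|\le L[\mathcal H,w_H](\eta,\mathcal X)$.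
   Context: Graphs: $G=(V,E)$, $V$ finite, $E\subseteq V\times V$; $G(-,v)=\{u:(u,v)\in E\}$. A homomorphism maps vertices preserving edges, acting on edges by $\varphi(u,v)=(\varphi(u),\varphi(v))$. A fibration is a homomorphism restricting to bijections $G(-,v)\to H(-,\varphi(v))$ for all $v$. A perceptron module over a finite DAG $B=(V_B,E_B)$ is $\mathbb B=((I_B,T_B),(\mathcal Y,\mathcal Z,\mathcal W),(M,\sigma))$: $I_B\subseteq V_B$ (vertices without parents), $T_B\subseteq V_B$, families of finite-dimensional real inner product spaces $\mathcal Y_v$ ($v\in V_B$), $\mathcal Z_e,\mathcal W_e$ ($e\in E_B$), maps $M_{(u,v)}:\mathcal W_{(u,v)}\times\mathcal Y_u\to\mathcal Z_{(u,v)}$ and $\sigma_v:\prod_{u\in B(-,v)}\mathcal Z_{(u,v)}\to\mathcal Y_v$ ($v\notin I_B$). Fix such $\mathbb B$, a finite set $\mathcal C$, $p_{\mathcal C}:\mathcal C\to I_B$. $\mathrm{LiftPMod}(\mathbb B,\mathcal C)$: triples $(G,\pi,c)$, $\pi:G\to B$ homomorphism, $c:\pi^{-1}(I_B)\to\mathcal C$ injective with $p_{\mathcal C}\circ c=\pi$ there. $\mathrm{Param}(\mathcal G)=\prod_{e\in E_G}\mathcal W_{\pi(e)}$. Forward function $\mathcal F_{\mathcal G}(w,x)=f$: $f_v=x_{c(v)}$ if $\pi(v)\in I_B$, else $f_v=F_v(w,f)$ where $F_v(w,g)=\sigma_{\pi(v)}((\sum_{u\in G(-,v)\cap\pi^{-1}(a)}M_{\pi(u,v)}(w_{(u,v)},g_u))_{a\in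 B(-,\pi(v))})$ (depends only on $w_{(u,v)},g_u$ for $u\in G(-,v)$). A morphism of lifted perceptrons $\varphi:(G,\pi_G,c_G)\to(H,\pi_H,c_H)$ is a fibration with $\pi_G=\pi_H\circ\varphi$ and $c_G=c_H\circ\varphi$. Quantitative continuity constant: for $\mathcal H=(H,\pi_H,c_H)$, $w^0\in\mathrm{Param}(\mathcal H)$, $\eta\ge0$, $x\in\mathcal X$, let $g^0=\mathcal F_{\mathcal H}(w^0,x)$; set $[L(\eta,x)]_v=0$ if $\pi_H(v)\in I_B$, and inductively otherwise $[L(\eta,x)]_v=\sup\|F_v(w,g)-F_v(w^0,g^0)\|$ over all $(w_{(u,v)},g_u)_{u\in H(-,v)}$ with $\|w_{(u,v)}-w^0_{(u,v)}\|\le\eta$ and $\|g_u-g^0_u\|\le[L(\eta,x)]_u$ ($F_v$ computed in $\mathcal H$). Then $L[\mathcal H,w^0](\eta,\mathcal X)=\sup_{x\in\mathcal X}\max_{v\in V_H}[L(\eta,x)]_v\in[0,+\infty]$. *)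

(* Defs.v *)
From HB Require Import structures.
From mathcomp Require Import all_boot all_order all_algebra.
From mathcomp Require Import boolp classical_sets reals constructive_ereal ereal.
Set Implicit Arguments. Unset Strict Implicit. Unset Printing Implicit Defensive.
Import Order.TTheory GRing.Theory Num.Theory.
Local Open Scope ring_scope.

Section Defs.
Variable R : realType.

(* Finite-dimensional real inner product spaces are modelled as 'rV[R]_n with the
   standard (Euclidean) inner product; this is its norm. *)
Definition enorm n (y : 'rV[R]_n) : R := Num.sqrt (\sum_i y 0 i ^+ 2).

(* Transport of a vector along an equality of indices (0 if the indices differ;
   only ever used where they are provably equal). *)
Definition tr (T : eqType) (d : T -> nat) (a b : T) (y : 'rV[R]_(d a)) : 'rV[R]_(d b) :=
  match a =P b with
  | ReflectT e => eq_rect a (fun z => 'rV[R]_(d z)) y b e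
  | ReflectF _ => 0
  end.
Arguments tr [T] d a b y.

(* Perceptron module over a finite DAG B = (VB, EB). Spaces indexed by edges
   are indexed by pairs of vertices (only values on edges are ever used). *)
Record pmod (VB : finType) := PMod {
  EB : rel VB;
  IB : {set VB};
  TB : {set VB};
  dY : VB -> nat;
  dZ : VB * VB -> nat;
  dW : VB * VB -> nat;
  Mm : forall e : VB * VB, 'rV[R]_(dW e) -> 'rV[R]_(dY e.1) -> 'rV[R]_(dZ e);
  sig : forall v : VB, (forall a : VB, 'rV[R]_(dZ (a, v))) -> 'rV[R]_(dY v);
  EB_acyclic : forall u v, EB u v -> ~~ connect EB v u;
  IB_roots : forall v, v \in IB -> forall u, ~~ EB u v
}.

Section Lift.
Variables (VB : finType) (B : pmod VB) (C : finType) (pC : C -> VB).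

(* (G, pi, c) in LiftPMod(B, C): pi homomorphism, c defined (and injective,
   compatible with pC) on pi^{-1}(I_B); values of c elsewhere are irrelevant. *)
Definition is_lifted (VG : finType) (EG : rel VG) (pi : VG -> VB) (c : VG -> C) : Prop :=
  [/\ forall u v, EG u v -> EB B (pi u) (pi v),
      {in [pred v | pi v \in IB B] &, injective c} &
      forall v, pi v \in IB B -> pC (c v) = pi v].

Definition param (VG : finType) (pi : VG -> VB) :=
  forall e : VG * VG, 'rV[R]_(dW B (pi e.1, pi e.2)).
Definition inputs := forall a : C, 'rV[R]_(dY B (pC a)).
Definition state (VG : finType) (pi : VG -> VB) := forall v : VG, 'rV[R]_(dY B (pi v)).

Arguments sig [VB] p v.
Arguments Mm [VB] p e.
Definition Fv (VG : finType) (EG : rel VG) (pi : VG -> VB) (w : param pi) (g : state pi)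
  (v : VG) : 'rV[R]_(dY B (pi v)) :=
  sig B (pi v) (fun a => \sum_(u | EG u v && (pi u == a))
     tr (dZ B) (pi u, pi v) (a, pi v) (Mm B (pi u, pi v) (w (u, v)) (g u))).

Definition fstep (VG : finType) (EG : rel VG) (pi : VG -> VB) (c : VG -> C)
  (w : param pi) (x : inputs) (f : state pi) : state pi := fun v =>
  if pi v \in IB B then tr (dY B) (pC (c v)) (pi v) (x (c v)) else Fv EG w f v.

(* The forward function: the inductive (on the DAG G) definition, realised by
   iterating the defining equations #|V_G| times (depth of G < #|V_G|). *)
Definition forward (VG : finType) (EG : rel VG) (pi : VG -> VB) (c : VG -> C)
  (w : param pi) (x : inputs) : state pi :=
  iter #|VG| (fstep EG c w x) (fun v => 0).

Definition Lstep (VH : finType) (EH : rel VH) (pi : VH -> VB) (w0 : param pi)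
  (g0 : state pi) (eta : R) (Lp : VH -> \bar R) (v : VH) : \bar R :=
  if pi v \in IB B then 0%E else
  ereal_sup [set z | exists (w : param pi) (g : state pi),
     (forall u, EH u v ->
        enorm (w (u, v) - w0 (u, v)) <= eta /\ ((enorm (g u - g0 u))%:E <= Lp u)%E)
     /\ z = (enorm (Fv EH w g v - Fv EH w0 g0 v))%:E].

Definition Lvert (VH : finType) (EH : rel VH) (pi : VH -> VB) (c : VH -> C)
  (w0 : param pi) (eta : R) (x : inputs) : VH -> \bar R :=
  iter #|VH| (Lstep EH w0 (forward EH c w0 x) eta) (fun _ => 0%E).

Definition Lconst (VH : finType) (EH : rel VH) (pi : VH -> VB) (c : VH -> C)
  (w0 : param pi) (eta : R) (X : set inputs) : \bar R :=
  ereal_sup [set z | exists x v, X x /\ z = Lvert EH c w0 eta x v].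

Definition is_fibration (VG VH : finType) (EG : rel VG) (EH : rel VH) (phi : VG -> VH) : Prop :=
  (forall u v, EG u v -> EH (phi u) (phi v)) /\
  (forall v, {in [pred u | EG u v] &, injective phi} /\
             (forall u', EH u' (phi v) -> exists2 u, EG u v & phi u = u')).

Definition lifted_morph (VG VH : finType) (EG : rel VG) (EH : rel VH)
  (piG : VG -> VB) (piH : VH -> VB) (cG : VG -> C) (cH : VH -> C) (phi : VG -> VH) : Prop :=
  [/\ is_fibration EG EH phi,
      forall v, piG v = piH (phi v) &
      forall v, piG v \in IB B -> cG v = cH (phi v)].

End Lift.
End Defs.
Arguments tr [R T] d a b y.
Arguments sig [R VB] p v.
Arguments Mm [R VB] p e.

(* Main.v *)
Require Import Defs.
From HB Require Import structures.
From mathcomp Require Import all_boot all_order all_algebra.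
From mathcomp Require Import boolp classical_sets reals constructive_ereal ereal.
Import Order.TTheory GRing.Theory Num.Theory.
Local Open Scope ring_scope.

Lemma tr_id (R : realType) (T : eqType) (d : T -> nat) a (y : 'rV[R]_(d a)) : tr d a a y = y.
Proof.
rewrite /tr; case: (a =P a) => [e|]; last by [].
by rewrite (eq_irrelevance e erefl).
Qed.

Lemma enorm0 (R : realType) n : enorm (0 : 'rV[R]_n) = 0.
Proof. rewrite /enorm big1 ?sqrtr0 // => i _; by rewrite mxE expr0n. Qed.

Lemma connect_hom (V W : finType) (E : rel V) (E' : rel W) (f : V -> W)
  (Hf : forall u v, E u v -> E' (f u) (f v)) a b :
  connect E a b -> connect E' (f a) (f b).
Proof.
move=> /connectP [p Hp ->]; elim: p a Hp => [|y p IH] a /=; first by rewrite connect0.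
by case/andP => Hay Hp; apply: connect_trans (connect1 (Hf _ _ Hay)) (IH _ Hp).
Qed.

Arguments connect_hom {V W E E' f} Hf {a b}.

Definition sanc (V : finType) (E : rel V) (v : V) := [set u | connect E u v & u != v].
Arguments sanc {V}.

Lemma sanc_lt {V : finType} {E : rel V} (acy : forall u v, E u v -> ~~ connect E v u) u v :
  E u v -> (#|sanc E u| < #|sanc E v|)%N.
Proof.
move=> Euv; apply: proper_card; apply/properP; split.
  apply/fintype.subsetP => w; rewrite !inE => /andP[cwu _]; apply/andP; split.
    exact: connect_trans cwu (connect1 Euv).
  apply/eqP => ewv; subst w; by move: (acy _ _ Euv); rewrite cwu.
exists u; rewrite !inE ?eqxx ?andbF //; rewrite connect1 //=.
apply/eqP => euv; subst u; by move: (acy _ _ Euv); rewrite connect0.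
Qed.

Lemma sanc_bound (V : finType) (E : rel V) v : (#|sanc E v| < #|V|)%N.
Proof.
apply: (@leq_ltn_trans #|[set~ v]|); last first.
  by rewrite cardsC1 ltn_predL; apply/card_gt0P; exists v.
apply: subset_leq_card; apply/fintype.subsetP => w; rewrite !inE => /andP[_ ->] //.
Qed.

Lemma iter_stab (V : finType) (E : rel V) (T : V -> Type)
  (F : (forall v, T v) -> (forall v, T v)) (r : V -> nat)
  (Hr : forall u v, E u v -> (r u < r v)%N)
  (Hloc : forall f g v, (forall u, E u v -> f u = g u) -> F f v = F g v) x :
  forall k v, (r v < k)%N -> forall m, (k <= m)%N -> iter m F x v = iter k F x v.
Proof.
elim=> [//|k IH] v rv [//|m] km /=.
apply: Hloc => u Euv; apply: IH => //; exact: leq_trans (Hr _ _ Euv) rv.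
Qed.

Theorem proposition4 (R : realType) (VB : finType) (B : pmod R VB)
  (C : finType) (pC : C -> VB)
  (VG : finType) (EG : rel VG) (piG : VG -> VB) (cG : VG -> C)
  (HG : is_lifted B pC EG piG cG) (wG : param B piG)
  (VH : finType) (EH : rel VH) (piH : VH -> VB) (cH : VH -> C)
  (HH : is_lifted B pC EH piH cH) (wH : param B piH)
  (X : set (inputs B pC)) (eta : R) (Heta : 0 <= eta) (phi : VG -> VH)
  (Hphi : lifted_morph B EG EH piG piH cG cH phi)
  (Hw : forall u v, EG u v ->
     enorm (wG (u, v) - tr (dW B) (piH (phi u), piH (phi v)) (piG u, piG v) (wH (phi u, phi v)))
       <= eta) :
  forall v : VG,
    (ereal_sup [set (enorm (forward EG cG wG x v
                   - tr (dY B) (piH (phi v)) (piG v) (forward EH cH wH x (phi v))))%:E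
                | x in X]
     <= Lconst EH cH wH eta X)%E.
Proof.
move: Hphi => [[Fhom Ffib] HpiE HcE].
case: HG => GhomB _ _; case: HH => HhomB _ _.
have Epi : piG = (fun v => piH (phi v)) by apply: funext => v; exact: HpiE.
subst piG.
have acyB := @EB_acyclic _ _ B.
have acyH : forall u v, EH u v -> ~~ connect EH v u.
  move=> u w Euw; apply/negP => /(connect_hom HhomB) c.
  by move: (acyB _ _ (HhomB _ _ Euw)); rewrite c.
have acyG : forall u v, EG u v -> ~~ connect EG v u.
  move=> u w Euw; apply/negP => /(connect_hom GhomB) c.
  by move: (acyB _ _ (GhomB _ _ Euw)); rewrite c.
have key : forall (x : inputs B pC) v, ((enorm (forward EG cG wG x v - forward EH cH wH x (phi v)))%:E
     <= Lvert EH cH wH eta x (phi v))%E.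
  move=> x.
  set fG := forward EG cG wG x; set fH := forward EH cH wH x.
  set LH := Lvert EH cH wH eta x.
  have fGfix : forall v, fstep EG cG wG x fG v = fG v.
    move=> v; rewrite /fG /forward -iterS.
    apply: (@iter_stab _ EG _ _ (fun v => #|sanc EG v|)) => //.
    - by move=> u w; apply: sanc_lt.
    - move=> f g w Hfg; rewrite /fstep; case: ifP => // _; rewrite /Fv; f_equal.
      apply: functional_extensionality_dep => a; apply: eq_bigr => u /andP[Eu _].
      by rewrite Hfg.
    - exact: sanc_bound.
  have fHfix : forall v, fstep EH cH wH x fH v = fH v.
    move=> v; rewrite /fH /forward -iterS.
    apply: (@iter_stab _ EH _ _ (fun v => #|sanc EH v|)) => //.
    - by move=> u w; apply: sanc_lt.
    - move=> f g w Hfg; rewrite /fstep; case: ifP => // _; rewrite /Fv; f_equal.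
      apply: functional_extensionality_dep => a; apply: eq_bigr => u /andP[Eu _].
      by rewrite Hfg.
    - exact: sanc_bound.
  have LHfix : forall v, Lstep EH wH fH eta LH v = LH v.
    move=> v; rewrite /LH /Lvert -iterS.
    apply: (@iter_stab _ EH _ _ (fun v => #|sanc EH v|)) => //.
    - by move=> u w; apply: sanc_lt.
    - move=> f g w Hfg; rewrite /Lstep; case: ifP => // _; congr ereal_sup.
      apply/seteqP; split => z [w' [g' [Hc ->]]]; exists w', g'; split => // u Eu;
        by have [h1 h2] := Hc u Eu; split => //; rewrite ?Hfg // -?Hfg.
    - exact: sanc_bound.
  suff : forall n v, (#|sanc EG v| < n)%N ->
      ((enorm (fG v - fH (phi v)))%:E <= LH (phi v))%E.
    by move=> H v; apply: (H _ v (sanc_bound _ EG v)).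
  elim => // n IH v rv.
  rewrite -fGfix -fHfix -LHfix /fstep /Lstep /=.
  case: ifP => Hin.
    by rewrite HcE //= subrr enorm0.
  apply: ereal_sup_ubound.
  pose pk u' := [pick u | EG u v && (phi u == u')].
  have pkE : forall u, EG u v -> pk (phi u) = Some u.
    move=> u Eu; rewrite /pk; case: pickP => [u0 /andP[Eu0 /eqP e]|/(_ u)]; last by rewrite Eu eqxx.
    congr Some; apply: (proj1 (Ffib v)) => //; by rewrite inE.
  pose g : state B piH := fun u' => match pk u' with
     Some u => tr (dY B) (piH (phi u)) (piH u') (fG u) | None => fH u' end.
  pose w : param B piH := fun e => match pk e.1 with
     Some u => tr (dW B) (piH (phi u), piH (phi v)) (piH e.1, piH e.2) (wG (u, v))
   | None => wH e end.
  have gE : forall u, EG u v -> g (phi u) = fG u.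
    by move=> u Eu; rewrite /g pkE // tr_id.
  have wE : forall u, EG u v -> w (phi u, phi v) = wG (u, v).
    by move=> u Eu; rewrite /w /= pkE //= tr_id.
  exists w, g; split.
    move=> u' Eu'; case: (proj2 (Ffib v) u' Eu') => u Eu <-.
    rewrite wE // gE //; split.
      by have := Hw u v Eu; rewrite tr_id.
    apply: IH; apply: leq_trans (@sanc_lt _ _ acyG _ _ Eu) _; by rewrite -ltnS.
  congr (_%:E); congr enorm; congr (_ - _).
  rewrite /Fv; f_equal; apply: functional_extensionality_dep => a; apply: esym.
  pose h' u' := odflt v (pk u').
  rewrite (reindex_onto phi h'); last first.
    move=> u' /andP[Eu' _]; case: (proj2 (Ffib v) u' Eu') => u Eu <-.
    by rewrite /h' pkE.
  have hE : forall u, EH (phi u) (phi v) -> h' (phi u) == u -> EG u v.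
    move=> u EHu /eqP hu; case: (proj2 (Ffib v) _ EHu) => u0 Eu0 e0.
    by move: hu; rewrite /h' -e0 pkE //= => e; subst u0.
  apply: eq_big => [u|u /andP[/andP[EHu _] hu]]; last first.
    have Eu := hE u EHu hu.
    by rewrite wE //; do 2 f_equal; apply: gE.
  case Eu: (EG u v).
    by rewrite Fhom //= /h' pkE // eqxx andbT.
  apply/negbTE/negP => /andP[/andP[EHu _] hu].
  by move: (hE u EHu hu); rewrite Eu.
move=> v; apply: ge_ereal_sup => z [x Xx <-]; rewrite tr_id.
apply: le_trans (key x v) _; apply: ereal_sup_ubound; by exists x, (phi v).
Qed.
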